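(* Let $(G,L,F)$ be a Stackelberg game and $\mathbf{x}=[x_\pi]\in\mathbf{X}^{PS}$. Then there exists $\mathbf{x}'=[x'_\pi]\in\mathbf{X}^{PS}$ such that $x'_\varnothing=x_\varnothing$ and $x'_{\pi p}=x'_{\pi' p}$ for every $p\in L$ and every $\pi,\pi'\in\Pi_{L\setminus\{p\}}$ having the same set of entries.
   Context: A finite game is $G=(N,\{S_p\}_{p\in N},\{u_p\}_{p\in N})$ with players $N=\{1,\dots,n\}$, finite nonempty strategy sets $S_p$, and utilities $u_p:S\to\mathbb{R}$ on $S=\prod_{p\in N}S_p$; write $s=(s_p,s_{-p})$ with $s_{-p}\in S_{-p}=\prod_{q\neq p}S_q$. $\mathcal{X}=\Delta(S)$ is the set of probability distributions on $S$ and $u_p(x)=\sum_{s\in S}x(s)u_p(s)$ for $x\in\mathcal{X}$. For $P\subseteq N$, $\mathcal{X}^{CE}_P$ is the set of $x\in\mathcal{X}$ such that for every $p\in P$ and all $s_p\neq s_p'\in S_p$: $\sum_{s_{-p}\in S_{-p}} x(s_p,s_{-p})\,(u_p(s_p,s_{-p})-u_p(s_p',s_{-p}))\ge 0$; $\mathcal{X}^{CE}=\mathcal{X}^{CE}_N$ is the set of correlated equilibria of $G$. A Stackelberg game (SG) is a triple $(G,L,F)$ with $L\cup F=N$ and $L\cap F=\emptyset$ (leaders and followers). For $P\subseteq N$, $\Pi_P$ is the set of ordered subsets of $P$ (finite sequences of pairwise distinct elements of $P$, including the empty sequence $\varnothing$); for $\pi\in\Pi_P$ and $p\in P$ not occurring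 in $\pi$, $\pi p$ is $\pi$ with $p$ appended; when used as a set, $\pi$ means its set of entries. $\mathbf{X}=\prod_{\pi\in\Pi_L}\mathcal{X}^{CE}_{\pi\cup F}$, with elements $\mathbf{x}=[x_\pi]_{\pi\in\Pi_L}$. For $\mathbf{x}\in\mathbf{X}$ and $\pi\in\Pi_L$, $x_\pi$ is stable if $u_p(x_\pi)\ge u_p(x_{\pi p})$ for all $p\in L\setminus\pi$; $\mathbf{x}$ is stable if $x_\varnothing$ is stable, and perfectly stable if $x_\pi$ is stable for every $\pi\in\Pi_L$; $\mathbf{X}^{S}$ and $\mathbf{X}^{PS}$ denote the sets of stable and perfectly stable elements of $\mathbf{X}$. *)

(* Defs.v *)
From HB Require Import structures.
From mathcomp Require Import all_boot all_order all_algebra.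
Set Implicit Arguments. Unset Strict Implicit. Unset Printing Implicit Defensive.
Import Order.TTheory GRing.Theory Num.Theory.
Local Open Scope ring_scope.

Section Game.
Variables (R : realFieldType) (n : nat) (S : 'I_n -> finType).

Definition profile := {dffun forall p : 'I_n, S p}.

(* (b, s_{-p}) : the profile s with player p's strategy replaced by b *)
Definition deviate (s : profile) (p : 'I_n) (b : S p) : profile :=
  finfun (fun q : 'I_n =>
    match p =P q with
    | ReflectT e => ecast q (S q) e b
    | ReflectF _ => s q
    end).
Arguments deviate s p b : clear implicits.

Variable u : 'I_n -> profile -> R.

Definition is_dist (x : {ffun profile -> R}) : Prop :=
  (forall s, 0 <= x s) /\ \sum_s x s = 1.

Definition exp_util (x : {ffun profile -> R}) (p : 'I_n) : R :=
  \sum_s x s * u p s.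

(* X^CE_P ; the sum over s_{-p} of x(s_p, s_{-p}) (...) is written as the sum
   over profiles s with s p = a *)
Definition inCE (P : {set 'I_n}) (x : {ffun profile -> R}) : Prop :=
  is_dist x /\
  forall p : 'I_n, p \in P -> forall a b : S p, a != b ->
    0 <= \sum_(s : profile | s p == a) x s * (u p s - u p (deviate s p b)).

Definition ordered_subset (P : {set 'I_n}) (pi : seq 'I_n) : bool :=
  uniq pi && all (fun q => q \in P) pi.

Variable L : {set 'I_n}.  (* leaders; followers F = ~: L *)

Definition inX (x : seq 'I_n -> {ffun profile -> R}) : Prop :=
  forall pi, ordered_subset L pi -> inCE ([set q in pi] :|: ~: L) (x pi).

Definition stable_at (x : seq 'I_n -> {ffun profile -> R}) (pi : seq 'I_n) : Prop :=
  forall p, p \in L -> p \notin pi -> exp_util (x (rcons pi p)) p <= exp_util (x pi) p.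

Definition perfectly_stable (x : seq 'I_n -> {ffun profile -> R}) : Prop :=
  forall pi, ordered_subset L pi -> stable_at x pi.

End Game.

(* Main.v *)
Require Import Defs.
From HB Require Import structures.
From mathcomp Require Import all_boot all_order all_algebra.
Import Order.TTheory GRing.Theory Num.Theory.
Local Open Scope ring_scope.
Set Implicit Arguments. Unset Strict Implicit.

Section Aux.
Variables (R : realFieldType) (T : eqType) (f : T -> R).

Definition am (d : T) (s : seq T) : T :=
  foldr (fun a b => if f a <= f b then a else b) d s.

Lemma am_mem d s : am d s \in d :: s.
Proof.
elim: s => [|a s IH] /=; first by rewrite inE.
case: ifP => _; first by rewrite !inE eqxx orbT.
move: IH; rewrite !inE => /orP[->|->] //; by rewrite !orbT.
Qed.

Lemma am_min d s a : a \in d :: s -> f (am d s) <= f a.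
Proof.
elim: s a => [|b s IH] a /=.
  by rewrite inE => /eqP->.
rewrite !inE => H.
case: ifP => Hb.
  move: H => /or3P[H|/eqP->|H] //.
  - by apply: (le_trans Hb); apply: IH; rewrite inE H.
  - by apply: (le_trans Hb); apply: IH; rewrite inE H orbT.
move: H => /or3P[H|/eqP->|H].
- by apply: IH; rewrite inE H.
- by apply: ltW; rewrite ltNge Hb.
- by apply: IH; rewrite inE H orbT.
Qed.
End Aux.

Section Constr.
Variables (R : realFieldType) (n : nat) (S : 'I_n -> finType).
Variables (u : 'I_n -> profile S -> R) (x : seq 'I_n -> {ffun profile S -> R}).

Definition key (pi : seq 'I_n) : seq 'I_n := [seq q <- enum 'I_n | q \in pi].

Definition best (pi : seq 'I_n) (p : 'I_n) : seq 'I_n :=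
  am (fun s => exp_util u (x (rcons s p)) p) (key pi) (permutations (key pi)).

Definition xp (s : seq 'I_n) : {ffun profile S -> R} :=
  match rev s with
  | [::] => x [::]
  | p :: r => x (rcons (best (rev r) p) p)
  end.

Lemma xp_rcons pi p : xp (rcons pi p) = x (rcons (best pi p) p).
Proof. by rewrite /xp rev_rcons revK. Qed.

Lemma key_uniq pi : uniq (key pi).
Proof. by rewrite filter_uniq // enum_uniq. Qed.

Lemma mem_key pi : key pi =i pi.
Proof. by move=> q; rewrite mem_filter mem_enum andbT. Qed.

Lemma perm_key pi t : uniq t -> t =i pi -> t \in key pi :: permutations (key pi).
Proof.
move=> ut et; rewrite inE mem_permutations; apply/orP; right.
apply: uniq_perm => // [|q]; first exact: key_uniq.
by rewrite et mem_key.
Qed.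

Lemma best_prop pi p : uniq (best pi p) /\ best pi p =i pi.
Proof.
have := am_mem (fun s => exp_util u (x (rcons s p)) p) (key pi) (permutations (key pi)).
rewrite -/(best pi p) inE mem_permutations => /orP[/eqP->|H].
  by split; [exact: key_uniq | exact: mem_key].
split; first by rewrite (perm_uniq H) key_uniq.
by move=> q; rewrite (perm_mem H) mem_key.
Qed.

Lemma best_min pi p t : uniq t -> t =i pi ->
  exp_util u (x (rcons (best pi p) p)) p <= exp_util u (x (rcons t p)) p.
Proof.
move=> ut et; rewrite /best.
exact: (@am_min _ _ (fun s => exp_util u (x (rcons s p)) p) _ _ _ (perm_key ut et)).
Qed.

Lemma key_eq pi pi' : [set q in pi] = [set q in pi'] -> key pi = key pi'.
Proof.
move=> E; apply: eq_filter => q.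
by rewrite -[q \in pi](in_set (fun q => q \in pi)) E inE.
Qed.

Lemma xp_repr s : uniq s -> exists t, [/\ uniq t, t =i s & xp s = x t].
Proof.
case/lastP: s => [|pi p] us; first by exists [::].
rewrite xp_rcons; exists (rcons (best pi p) p).
have [ub eb] := best_prop pi p.
move: us; rewrite !rcons_uniq => /andP[pn up].
split => //.
- by rewrite ub andbT (eb p).
- by move=> q; rewrite !mem_rcons !inE eb.
Qed.
End Constr.

Theorem theorem6 (R : realFieldType) (n : nat) (S : 'I_n -> finType)
    (S_nonempty : forall p : 'I_n, (0 < #|S p|)%N)
    (u : 'I_n -> profile S -> R) (L : {set 'I_n})
    (x : seq 'I_n -> {ffun profile S -> R}) :
  inX u L x -> perfectly_stable u L x ->
  exists x' : seq 'I_n -> {ffun profile S -> R},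
    [/\ inX u L x', perfectly_stable u L x', x' [::] = x [::] &
      forall (p : 'I_n) (pi pi' : seq 'I_n), p \in L ->
        ordered_subset (L :\ p) pi -> ordered_subset (L :\ p) pi' ->
        [set q in pi] = [set q in pi'] ->
        x' (rcons pi p) = x' (rcons pi' p)].
Proof.
move=> hX hPS; exists (xp u x); split.
- move=> s /andP[us aS].
  have [t [ut et ->]] := xp_repr u x us.
  have ost : ordered_subset L t.
    by rewrite /ordered_subset ut /=; apply/allP => q; rewrite et => /(allP aS).
  have -> : [set q in s] = [set q in t] by apply/setP => q; rewrite !inE et.
  exact: hX.
- move=> s os q qL qs; have /andP[us aS] := os.
  rewrite xp_rcons; have [t [ut et ->]] := xp_repr u x us.
  apply: le_trans (best_min u x q ut et) _.
  have ost : ordered_subset L t.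
    by rewrite /ordered_subset ut /=; apply/allP => r; rewrite et => /(allP aS).
  by apply: (hPS t ost q qL); rewrite et.
- by [].
- move=> p pi pi' _ _ _ E; rewrite !xp_rcons /best (key_eq E).
  done.
Qed.
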